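(* For every $g\ge 1$, the number of perfect matchings of $\mathcal{H}_g$ is $\psi(\mathcal{H}_g)=2^{\frac{1}{9}\cdot 4^g+\frac{2}{3}g-\frac{1}{9}}$, and the entropy for perfect matchings satisfies $$\lim_{g\to\infty}\frac{\ln \psi(\mathcal{H}_g)}{N_g/2}=\frac{\ln 2}{3},$$ where $N_g=\frac{2}{3}(4^g+2)$ is the number of vertices of $\mathcal{H}_g$.
   Context: $\mathcal{H}_1$ is the 4-cycle. For $g>1$, $\mathcal{H}_g$ is obtained from $\mathcal{H}_{g-1}$ as follows: every edge $\{u,v\}$ of $\mathcal{H}_{g-1}$ is kept, and two new vertices $w,w'$ are added together with the edges $\{u,w\},\{w,w'\},\{w',v\}$ (so $u,v,w',w$ form a quadrangle containing the edge $\{u,v\}$). $\psi(G)$ denotes the number of perfect matchings of a graph $G$. *)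

(* Defs.v *)
From HB Require Import structures.
From mathcomp Require Import all_boot all_order all_algebra.
From mathcomp Require Import all_classical all_reals all_analysis.

Set Implicit Arguments.
Unset Strict Implicit.
Unset Printing Implicit Defensive.

(* A finite (multi)graph: vertices are 0 .. nv-1, edges listed as pairs. *)
Record graph := Graph { nv : nat; edges : seq (nat * nat) }.

Definition C4 : graph := Graph 4 [:: (0, 1); (1, 2); (2, 3); (3, 0)].

(* One step H_{g-1} -> H_g: edge number i, {u,v}, is kept, and two new
   vertices w = nv + 2i, w' = nv + 2i + 1 are added with edges
   {u,w}, {w,w'}, {w',v}. *)
Definition quad_edges (n : nat) (ei : (nat * nat) * nat) : seq (nat * nat) :=
  let: ((u, v), i) := ei in
  let w := n + 2 * i in
  let w' := n + 2 * i + 1 in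
  [:: (u, v); (u, w); (w, w'); (w', v)].

Definition Hstep (G : graph) : graph :=
  Graph (nv G + 2 * size (edges G))
        (flatten (map (quad_edges (nv G))
                      (zip (edges G) (iota 0 (size (edges G)))))).

(* H g = H_g for g >= 1 (H 0 is also set to the 4-cycle; irrelevant). *)
Definition H (g : nat) : graph := iter g.-1 Hstep C4.

Definition incident (v : nat) (e : nat * nat) : bool := (e.1 == v) || (e.2 == v).

Definition perfect_matching (G : graph) (M : {set 'I_(size (edges G))}) : bool :=
  [forall v : 'I_(nv G),
     #|[set i in M | incident v (nth (0, 0) (edges G) i)]| == 1].

Definition psi (G : graph) : nat :=
  #|[set M : {set 'I_(size (edges G))} | perfect_matching M]|.

(* Main.v *)
Require Import Defs.
From HB Require Import structures.
From mathcomp Require Import all_boot all_order all_algebra.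
From mathcomp Require Import all_classical all_reals all_analysis.
From mathcomp Require Import zify ring lra.


Definition memn {N : nat} (M : {set 'I_N}) (j : nat) : bool :=
  if (insub j : option 'I_N) is Some x then x \in M else false.

Lemma memn_ord N (M : {set 'I_N}) (x : 'I_N) : memn M x = (x \in M).
Proof. by rewrite /memn valK. Qed.

Lemma memn_lt N (M : {set 'I_N}) j : memn M j -> j < N.
Proof. by rewrite /memn; case: insubP => // x _ <- _; exact: ltn_ord. Qed.

Lemma memn_set N (P : nat -> bool) j :
  memn [set x : 'I_N | P (val x)] j = (j < N) && P j.
Proof.
rewrite /memn; case: insubP => [x -> <- | /negbTE ->] //.
by rewrite inE.
Qed.

Lemma memnU N (A B : {set 'I_N}) j : memn (A :|: B) j = memn A j || memn B j.
Proof. by rewrite /memn; case: insubP => [x _ _ | _] //; rewrite inE. Qed.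

Lemma memnD N (A B : {set 'I_N}) j : memn (A :\: B) j = memn A j && ~~ memn B j.
Proof. by rewrite /memn; case: insubP => [x _ _ | _] //; rewrite inE andbC. Qed.

Definition cnt (G : graph) (c : nat -> bool) (v : nat) : nat :=
  \sum_(0 <= j < size (edges G)) (c j && incident v (nth (0, 0) (edges G) j)).

Definition PMc (G : graph) (c : nat -> bool) : Prop :=
  forall v, v < nv G -> cnt G c v = 1.

Lemma cnt_ext G c1 c2 v : (forall j, j < size (edges G) -> c1 j = c2 j) ->
  cnt G c1 v = cnt G c2 v.
Proof. move=> h; apply: eq_big_nat => j /andP[_ hj]; by rewrite h. Qed.

Lemma card_cnt N (M : {set 'I_N}) (P : nat -> bool) :
  #|[set i in M | P (val i)]| = \sum_(0 <= j < N) (memn M j && P j).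
Proof.
rewrite big_mkord -sum1_card big_mkcond /=; apply: eq_bigr => i _.
by rewrite inE memn_ord; case: (_ && _).
Qed.

Lemma pmP G (M : {set 'I_(size (edges G))}) :
  perfect_matching M <-> PMc G (memn M).
Proof.
rewrite /perfect_matching /PMc; split.
  move=> /forallP h v hv; have := h (Ordinal hv).
  by rewrite (card_cnt _ M (fun j => incident v (nth (0,0) (edges G) j))) => /eqP.
move=> h; apply/forallP => v.
rewrite (card_cnt _ M (fun j => incident v (nth (0,0) (edges G) j))); apply/eqP; exact: h.
Qed.

Lemma psiE G : psi G = #|[set M : {set 'I_(size (edges G))} | perfect_matching M]|.
Proof. by []. Qed.

Definition wf (G : graph) : bool :=
  all (fun e : nat * nat => (e.1 < nv G) && (e.2 < nv G) && (e.1 != e.2)) (edges G).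

Lemma wf_nth G i : wf G -> i < size (edges G) ->
  let e := nth (0,0) (edges G) i in [/\ e.1 < nv G, e.2 < nv G & e.1 != e.2].
Proof.
move=> /all_nthP h hi /=; have := h (0,0) i hi => /andP[/andP[-> ->] ->]; done.
Qed.

Lemma delta_sum (F : nat -> nat) i0 m : i0 < m ->
  \sum_(0 <= i < m) (if i == i0 then F i else 0) = F i0.
Proof.
move=> h; rewrite -big_mkcond /= big_nat1_eq; by rewrite h.
Qed.

Lemma block_sum (F : nat -> nat) m :
  \sum_(0 <= j < 4 * m) F j =
  \sum_(0 <= i < m) (F (4 * i) + F (4 * i + 1) + F (4 * i + 2) + F (4 * i + 3)).
Proof.
elim: m => [|m IH]; first by rewrite !big_geq.
rewrite [RHS]big_nat_recr //= -IH.
have -> : 4 * m.+1 = (4 * m + 3).+1 by lia.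
rewrite big_nat_recr /=; last lia.
have -> : 4 * m + 3 = (4 * m + 2).+1 by lia.
rewrite big_nat_recr /=; last lia.
have -> : 4 * m + 2 = (4 * m + 1).+1 by lia.
rewrite big_nat_recr /=; last lia.
have -> : 4 * m + 1 = (4 * m).+1 by lia.
rewrite big_nat_recr /=; last lia.
by rewrite !addnA.
Qed.


Lemma size_flat n (es : seq (nat * nat)) s :
  size (flatten (map (quad_edges n) (zip es (iota s (size es))))) = 4 * size es.
Proof.
elim: es s => [|[u v] es IH] s //=.
by rewrite IH; lia.
Qed.

Lemma nth_flat n (es : seq (nat * nat)) s i k : i < size es -> k < 4 ->
  nth (0,0) (flatten (map (quad_edges n) (zip es (iota s (size es))))) (4 * i + k) =
  let e := nth (0,0) es i in
  nth (0,0) [:: e; (e.1, n + 2 * (s + i)); (n + 2 * (s + i), n + 2 * (s + i) + 1);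
             (n + 2 * (s + i) + 1, e.2)] k.
Proof.
move: k; elim: es s i => [|[u v] es IH] s i k //= hi hk.
case: i hi => [|i] hi.
  by rewrite muln0 add0n addn0; case: k hk => [|[|[|[|k]]]].
have -> : 4 * i.+1 + k = (4 * i + k).+4 by lia.
by rewrite /= IH // addSnnS.
Qed.

Lemma size_step G : size (edges (Hstep G)) = 4 * size (edges G).
Proof. exact: size_flat. Qed.

Lemma nv_step G : nv (Hstep G) = nv G + 2 * size (edges G).
Proof. by []. Qed.

Lemma nth_step G i k : i < size (edges G) -> k < 4 ->
  nth (0,0) (edges (Hstep G)) (4 * i + k) =
  let e := nth (0,0) (edges G) i in let n := nv G in
  nth (0,0) [:: e; (e.1, n + 2 * i); (n + 2 * i, n + 2 * i + 1);
             (n + 2 * i + 1, e.2)] k.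
Proof. move=> hi hk; exact: (nth_flat (nv G) (edges G) 0 i k hi hk). Qed.

Lemma wf_step G : wf G -> wf (Hstep G).
Proof.
move=> w; apply/(all_nthP (0,0)) => j; rewrite size_step => hj.
have hi : j %/ 4 < size (edges G) by rewrite ltn_divLR // mulnC.
have hk : j %% 4 < 4 by rewrite ltn_mod.
have -> : j = 4 * (j %/ 4) + j %% 4 by rewrite mulnC -divn_eq.
rewrite nth_step //=.
case: (wf_nth _ _ w hi) => h1 h2 h3.
move: (j %/ 4) (j %% 4) hi hk h1 h2 h3 => i [|[|[|[|k]]]] //= hi hk h1 h2 h3;
  rewrite ?h3 ?andbT; apply/andP; split; try (apply/andP; split); try lia;
  apply/eqP; lia.
Qed.


Lemma cnt_step G c v : cnt (Hstep G) c v =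
  \sum_(0 <= i < size (edges G))
    let e := nth (0,0) (edges G) i in let n := nv G in
    ((c (4 * i) && incident v e) +
     (c (4 * i + 1) && incident v (e.1, n + 2 * i)) +
     (c (4 * i + 2) && incident v (n + 2 * i, n + 2 * i + 1)) +
     (c (4 * i + 3) && incident v (n + 2 * i + 1, e.2))).
Proof.
rewrite /cnt size_step block_sum; apply: eq_big_nat => i /andP[_ hi].
have := nth_step G i 0 hi isT; rewrite addn0 => ->.
by rewrite !nth_step.
Qed.

Lemma cnt_old G c v : wf G -> v < nv G ->
  (forall i, i < size (edges G) -> c (4 * i + 3) = c (4 * i + 1)) ->
  cnt (Hstep G) c v = \sum_(0 <= i < size (edges G))
    ((c (4 * i) && incident v (nth (0,0) (edges G) i)) +
     (c (4 * i + 1) && incident v (nth (0,0) (edges G) i))).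
Proof.
move=> w hv h3; rewrite cnt_step; apply: eq_big_nat => i /andP[_ hi] /=.
rewrite h3 //; case: (wf_nth _ _ w hi) => h1 h2 h12.
move: h1 h2 h12; rewrite /incident /=.
case: (nth (0,0) (edges G) i) => a b /= h1 h2 h12.
have : a != b by [].
move: (c (4 * i)) (c (4 * i + 1)) (c (4 * i + 2)) => [] [] [] /eqP ?; lia.
Qed.

Lemma cnt_w G c i0 : wf G -> i0 < size (edges G) ->
  cnt (Hstep G) c (nv G + 2 * i0) = c (4 * i0 + 1) + c (4 * i0 + 2).
Proof.
move=> w hi0; rewrite cnt_step.
rewrite -(delta_sum (fun i => c (4 * i + 1) + c (4 * i + 2)) i0 _ hi0).
apply: eq_big_nat => i /andP[_ hi] /=.
case: (wf_nth _ _ w hi); rewrite /incident /=.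
case: (nth (0,0) (edges G) i) => a b /= h1 h2 h12.
move: (c (4 * i)) (c (4 * i + 1)) (c (4 * i + 2)) (c (4 * i + 3)) => [] [] [] [];
  case: (i =P i0) => ?; lia.
Qed.

Lemma cnt_w' G c i0 : wf G -> i0 < size (edges G) ->
  cnt (Hstep G) c (nv G + 2 * i0 + 1) = c (4 * i0 + 2) + c (4 * i0 + 3).
Proof.
move=> w hi0; rewrite cnt_step.
rewrite -(delta_sum (fun i => c (4 * i + 2) + c (4 * i + 3)) i0 _ hi0).
apply: eq_big_nat => i /andP[_ hi] /=.
case: (wf_nth _ _ w hi); rewrite /incident /=.
case: (nth (0,0) (edges G) i) => a b /= h1 h2 h12.
move: (c (4 * i)) (c (4 * i + 1)) (c (4 * i + 2)) (c (4 * i + 3)) => [] [] [] [];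
  case: (i =P i0) => ?; lia.
Qed.


Lemma term_le (F : nat -> nat) i m : i < m -> F i <= \sum_(0 <= j < m) F j.
Proof.
move=> hi; rewrite -{1}(delta_sum F i m hi); apply: leq_sum => j _.
by case: eqP.
Qed.

Lemma step_char G c : wf G ->
  PMc (Hstep G) c <->
  [/\ forall i, i < size (edges G) -> c (4 * i + 2) = ~~ c (4 * i + 1),
      forall i, i < size (edges G) -> c (4 * i + 3) = c (4 * i + 1),
      forall i, i < size (edges G) -> ~~ (c (4 * i) && c (4 * i + 1)) &
      PMc G (fun i => c (4 * i) || c (4 * i + 1))].
Proof.
move=> w; set m := size (edges G); split.
  move=> h.
  have hw : forall i, i < m -> c (4 * i + 1) + c (4 * i + 2) = 1.
    move=> i hi; rewrite -(cnt_w G c i w hi); apply: h; rewrite nv_step; lia.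
  have hw' : forall i, i < m -> c (4 * i + 2) + c (4 * i + 3) = 1.
    move=> i hi; rewrite -(cnt_w' G c i w hi); apply: h; rewrite nv_step; lia.
  have h2 : forall i, i < m -> c (4 * i + 2) = ~~ c (4 * i + 1).
    move=> i hi; move: (hw i hi); by case: (c _); case: (c _).
  have h3 : forall i, i < m -> c (4 * i + 3) = c (4 * i + 1).
    move=> i hi; move: (hw i hi) (hw' i hi).
    by case: (c (4 * i + 1)); case: (c (4 * i + 2)); case: (c (4 * i + 3)).
  have hS : forall v, v < nv G -> \sum_(0 <= i < m)
    ((c (4 * i) && incident v (nth (0,0) (edges G) i)) +
     (c (4 * i + 1) && incident v (nth (0,0) (edges G) i))) = 1.
    move=> v hv; rewrite -cnt_old //; apply: h; rewrite nv_step; lia.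
  have hd : forall i, i < m -> ~~ (c (4 * i) && c (4 * i + 1)).
    move=> i hi; apply/negP => /andP[ha hb].
    case: (wf_nth _ _ w hi) => h1 _ _.
    have := term_le (fun i0 => (c (4 * i0) && incident (nth (0,0) (edges G) i).1
        (nth (0,0) (edges G) i0)) + (c (4 * i0 + 1) && incident (nth (0,0) (edges G) i).1
        (nth (0,0) (edges G) i0))) i m hi.
    by rewrite hS //= ha hb /incident eqxx.
  split => // v hv; rewrite -[X in _ = X](hS v hv) /cnt; apply: eq_big_nat => i /andP[_ hi].
  move: (hd i hi); case: (c _); case: (c _); by case: incident.
case=> h2 h3 hd hp v; rewrite nv_step => hv.
case: (ltnP v (nv G)) => hvn.
  rewrite cnt_old // -[X in _ = X](hp v hvn) /cnt; apply: eq_big_nat => i /andP[_ hi].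
  move: (hd i hi); case: (c _); case: (c _); by case: incident.
set i := (v - nv G) %/ 2.
have hi : i < m by rewrite /i; lia.
have [-> | ->] : v = nv G + 2 * i \/ v = nv G + 2 * i + 1 by rewrite /i; lia.
  by rewrite cnt_w // h2 //; case: (c _).
by rewrite cnt_w' // h2 // h3 //; case: (c _).
Qed.

Lemma pm_size G c : wf G -> PMc G c ->
  2 * \sum_(0 <= j < size (edges G)) c j = nv G.
Proof.
move=> w h.
have -> : nv G = \sum_(0 <= v < nv G) cnt G c v.
  rewrite (eq_big_nat _ _ (F2 := fun _ => 1)); last by move=> v /andP[_ hv]; apply: h.
  by rewrite sum_nat_const_nat subn0 muln1.
rewrite /cnt exchange_big big_distrr /=; apply: eq_big_nat => j /andP[_ hj].
case: (wf_nth _ _ w hj); case: (nth (0,0) (edges G) j) => a b /= ha hb hab.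
rewrite /incident /=.
have -> : \sum_(0 <= i < nv G) (c j && ((a == i) || (b == i))) =
   \sum_(0 <= i < nv G) ((if i == a then nat_of_bool (c j) else 0) +
                        (if i == b then nat_of_bool (c j) else 0)).
  apply: eq_big_nat => i _; move/eqP: hab => hab.
  case: (c j); case: (i =P a) => ?; case: (i =P b) => ?; lia.
rewrite big_split /= (delta_sum (fun _ => nat_of_bool (c j)) a) //.
rewrite (delta_sum (fun _ => nat_of_bool (c j)) b) //; lia.
Qed.


Definition phi (a b : nat -> bool) (j : nat) : bool :=
  if j %% 4 == 0 then a (j %/ 4) else if j %% 4 == 2 then ~~ b (j %/ 4) else b (j %/ 4).

Lemma phiE a b i k : k < 4 -> phi a b (4 * i + k) =
  if k == 0 then a i else if k == 2 then ~~ b i else b i.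
Proof.
move=> hk; rewrite /phi.
have -> : (4 * i + k) %/ 4 = i by lia.
have -> : (4 * i + k) %% 4 = k by lia.
by [].
Qed.

Lemma memn_sub N (A B : {set 'I_N}) j : A \subset B -> memn A j -> memn B j.
Proof. by move=> s; rewrite /memn; case: insubP => // x _ _; apply: (fintype.subsetP s). Qed.

Lemma PMc_ext G c1 c2 : PMc G c1 -> (forall j, j < size (edges G) -> c1 j = c2 j) ->
  PMc G c2.
Proof. move=> h e v hv; rewrite -(cnt_ext G c1 c2 v e); exact: h. Qed.

Lemma card_memn N (M : {set 'I_N}) : #|M| = \sum_(0 <= j < N) memn M j.
Proof.
rewrite big_mkord -sum1_card big_mkcond /=; apply: eq_bigr => i _.
by rewrite memn_ord; case: (_ \in _).
Qed.

Definition Psi G (p : {set 'I_(size (edges G))} * {set 'I_(size (edges G))}) :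
  {set 'I_(size (edges (Hstep G)))} :=
  [set j : 'I_(size (edges (Hstep G))) | phi (memn (p.1 :\: p.2)) (memn p.2) (val j)].

Lemma psi_step G : wf G -> psi (Hstep G) = psi G * 2 ^ (nv G %/ 2).
Proof.
move=> w; set m := size (edges G).
have cE : forall p i k, i < m -> k < 4 -> memn (Psi G p) (4 * i + k) =
   if k == 0 then memn (p.1 :\: p.2) i else if k == 2 then ~~ memn p.2 i
   else memn p.2 i.
  move=> p i k hi hk; rewrite /Psi (memn_set _ (phi (memn (p.1 :\: p.2)) (memn p.2))).
  rewrite phiE // size_step.
  have -> : 4 * i + k < 4 * size (edges G) by rewrite -/m; lia.
  by [].
have cE0 : forall p i, i < m -> memn (Psi G p) (4 * i) = memn (p.1 :\: p.2) i.
  by move=> p i hi; have := cE p i 0 hi isT; rewrite addn0.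
set D := [set p : {set 'I_m} * {set 'I_m} | perfect_matching p.1 && (p.2 \subset p.1)].
have E : [set M' | perfect_matching M'] = Psi G @: D.
  apply/setP => M'; rewrite inE; apply/idP/imsetP.
    move=> /pmP /(step_char _ _ w) [h2 h3 hd hp].
    set A := [set x : 'I_m | memn M' (4 * val x)].
    set B := [set x : 'I_m | memn M' (4 * val x + 1)].
    have mA : forall i, memn A i = (i < m) && memn M' (4 * i).
      by move=> i; rewrite /A (memn_set _ (fun j => memn M' (4 * j))).
    have mB : forall i, memn B i = (i < m) && memn M' (4 * i + 1).
      by move=> i; rewrite /B (memn_set _ (fun j => memn M' (4 * j + 1))).
    exists (A :|: B, B).
      rewrite inE /= finset.subsetUr andbT; apply/pmP; apply: (PMc_ext _ _ _ hp) => j hj.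
      by rewrite memnU mA mB hj.
    apply/setP => j; rewrite -!memn_ord.
    have [i [k [hk [hi ej]]]] : exists i k, k < 4 /\ i < m /\ val j = 4 * i + k.
      have hj : val j < 4 * m by rewrite -(size_step G); exact: ltn_ord j.
      move: (val j) hj => jj hj; exists (jj %/ 4), (jj %% 4); lia.
    rewrite ej cE //= memnD memnU !mA !mB hi /=.
    move: (h2 i hi) (h3 i hi) (hd i hi).
    case: k hk ej => [|[|[|[|k]]]] //= _ _ e2 e3 hdi; rewrite ?addn0 ?e2 ?e3; move: hdi;
      by case: (memn M' (4 * i)); case: (memn M' (4 * i + 1)).
  case=> [[M B]]; rewrite inE /= => /andP[pm sub] ->.
  apply/pmP; apply/(step_char _ _ w); split.
  - by move=> i hi; rewrite !cE.
  - by move=> i hi; rewrite !cE.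
  - by move=> i hi; rewrite cE0 // cE //= memnD; case: (memn B i); rewrite ?andbF.
  - apply: (PMc_ext _ _ _ (iffLR (pmP _ _) pm)) => j hj; rewrite cE0 // cE //= memnD.
    by case hb: (memn B j); rewrite ?andbT ?orbT ?orbF //; apply: (memn_sub _ _ _ _ sub hb).
rewrite psiE E card_in_imset; last first.
  move=> [M1 B1] [M2 B2]; rewrite !inE /= => /andP[_ s1] /andP[_ s2] e.
  have hm : forall i, i < m -> memn (M1 :\: B1) i = memn (M2 :\: B2) i /\
                             memn B1 i = memn B2 i.
    move=> i hi; split.
      by have := cE0 (M1, B1) i hi; rewrite e cE0.
    by have := cE (M1, B1) i 1 hi isT; rewrite e cE.
  have eB : B1 = B2.
    by apply/setP => x; rewrite -!memn_ord; case: (hm x (ltn_ord x)).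
  subst B2; congr pair; apply/setP => x; rewrite -!memn_ord.
  case: (hm x (ltn_ord x)) => h _; move: h; rewrite !memnD.
  case hb: (memn B1 x); last by rewrite !andbT.
  by rewrite (memn_sub _ _ _ _ s1 hb) (memn_sub _ _ _ _ s2 hb).
rewrite -sum1dep_card -(pair_big_dep (fun M : {set 'I_m} => perfect_matching M)
   (fun M B : {set 'I_m} => B \subset M) (fun _ _ => 1)) /=.
rewrite (eq_bigr (fun _ => 2 ^ (nv G %/ 2) * 1)).
  by rewrite -big_distrr /= sum1dep_card mulnC.
move=> M /pmP pm; rewrite muln1 sum1dep_card -/(powerset M) card_powerset.
have := pm_size G _ w pm; rewrite -card_memn => <-.
by rewrite mulKn.
Qed.


Lemma wfC4 : wf C4. Proof. by []. Qed.

Lemma psiC4 : psi C4 = 2.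
Proof.
have cntE : forall c v, cnt C4 c v = c 0 && incident v (0,1) + c 1 && incident v (1,2)
    + c 2 && incident v (2,3) + c 3 && incident v (3,0).
  by move=> c v; rewrite /cnt /= !big_nat_recr //= big_geq.
pose f (b : bool) : {set 'I_(size (edges C4))} := [set x | odd (val x) != b].
have mf : forall b j, memn (f b) j = (j < 4) && (odd j != b).
  by move=> b j; rewrite /f (memn_set _ (fun j => odd j != b)).
have E : [set M : {set 'I_(size (edges C4))} | perfect_matching M] = f @: [set: bool].
  apply/setP => M; rewrite inE; apply/idP/imsetP.
    move/pmP => h; exists (memn M 0) => //.
    have h0 := h 0 isT; have h1 := h 1 isT; have h2 := h 2 isT; have h3 := h 3 isT.
    rewrite !cntE /incident /= in h0 h1 h2 h3.
    apply/setP => x; rewrite -!memn_ord mf ltn_ord /=.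
    case: x => [[|[|[|[|x]]]] hx] //=; move: h0 h1 h2 h3;
    by case: (memn M 0); case: (memn M 1); case: (memn M 2); case: (memn M 3).
  case=> b _ ->; apply/pmP => v hv; rewrite cntE !mf /incident /=.
  by case: v hv => [|[|[|[|v]]]] //; case: b.
rewrite psiE E card_imset ?cardsT ?card_bool //.
move=> b1 b2 e; have := mf b1 0; rewrite e mf /=.
by case: b1 e; case: b2.
Qed.

Lemma Hfacts k :
  [/\ wf (iter k Hstep C4), size (edges (iter k Hstep C4)) = 4 ^ k.+1,
      3 * nv (iter k Hstep C4) = 2 * 4 ^ k.+1 + 4 &
      exists s, psi (iter k Hstep C4) = 2 ^ s /\ 9 * s = 4 ^ k.+1 + 6 * k + 5].
Proof.
elim: k => [|k [w hs hn [s [hp hs9]]]]; rewrite ?iterS.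
  split; [exact: wfC4 | by [] | by [] | exists 1; split; [by rewrite psiC4 | by []]].
have e4 : 4 ^ k.+2 = 4 * 4 ^ k.+1 by rewrite expnS.
split.
- exact: wf_step.
- by rewrite size_step hs e4.
- rewrite nv_step hs mulnDr hn e4; lia.
exists (s + nv (iter k Hstep C4) %/ 2); split.
  by rewrite psi_step // hp expnD.
rewrite e4; move: hn hs9; move: (4 ^ k.+1) (nv (iter k Hstep C4)) => X n; lia.
Qed.

Import Order.TTheory GRing.Theory Num.Theory.
Import numFieldNormedType.Exports.
Local Open Scope classical_set_scope.
Local Open Scope ring_scope.

Theorem theorem4 (R : realType) :
  (forall g : nat, (1 <= g)%N ->
     (psi (H g))%:R =
       (2 : R) `^ ((4 ^ g)%:R / 9 + 2 / 3 * g%:R - 1 / 9)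
     /\ (nv (H g))%:R = 2 / 3 * ((4 ^ g)%:R + 2 : R))
  /\
  (fun g : nat => ln ((psi (H g))%:R : R) / ((nv (H g))%:R / 2))
     @ \oo --> ln 2 / 3.
Proof.
have key : forall n, exists s, [/\ psi (H n.+1) = (2 ^ s)%N,
    (9 * s = 4 ^ n.+1 + 6 * n + 5)%N & (3 * nv (H n.+1) = 2 * 4 ^ n.+1 + 4)%N].
  move=> n; case: (Hfacts n) => _ _ hn [s [hp hs]]; by exists s.
have keyR : forall n, exists s, [/\ (psi (H n.+1))%:R = (2:R) ^+ s,
    9 * s%:R = (4 ^ n.+1)%:R + 6 * n%:R + 5 :> R &
    3 * (nv (H n.+1))%:R = 2 * (4 ^ n.+1)%:R + 4 :> R].
  move=> n; case: (key n) => s [hp hs hn]; exists s; split.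
  - by rewrite hp natrX.
  - by rewrite -!natrM -!natrD hs.
  - by rewrite -!natrM -!natrD hn.
split.
  case=> // n _; case: (keyR n) => s [hp hs hn]; split.
    rewrite hp -powR_mulrn //; congr (_ `^ _).
    have hg : (n.+1)%:R = n%:R + 1 :> R by rewrite -addn1 natrD.
    rewrite hg; lra.
  lra.
pose u := fun n : nat => (6 * n%:R + 3) / ((4 ^ n.+1)%:R + 2) : R.
rewrite -cvg_shiftS (@eq_cvg _ _ _ _ (fun n => ln 2 / 3 + ln 2 / 3 * u n)); last first.
  move=> n /=; case: (keyR n) => s [hp hs hn].
  have hX : 0 < (4 ^ n.+1)%:R + 2 :> R by rewrite ltr_wpDl // ler0n.
  have es : s%:R = ((4 ^ n.+1)%:R + 6 * n%:R + 5) / 9 :> R by lra.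
  have en : (nv (H n.+1))%:R = (2 * (4 ^ n.+1)%:R + 4) / 3 :> R by lra.
  rewrite hp lnXn // -[ln 2 *+ s]mulr_natr es en /u.
  field.
  by apply/andP; split; apply/negP => /eqP h; lra.
have hu : u @ \oo --> 0.
  have h6 : (fun n => 6 * harmonic n) @ \oo --> (0:R).
    by rewrite -(mulr0 6); exact: cvgMl_tmp cvg_harmonic.
  apply: (squeeze_cvgr _ (cvg_cst (0:R)) h6).
  apply: nearW => n; apply/andP; split.
    by rewrite /u divr_ge0 // ?addr_ge0 ?mulr_ge0 ?ler0n.
  have hX : 0 < (4 ^ n.+1)%:R + 2 :> R by rewrite ltr_wpDl // ler0n.
  have hn1 : 0 < n.+1%:R :> R by rewrite ltr0n.
  have hnat : (n.+1 ^ 2 <= 4 ^ n.+1)%N.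
    have -> : (4 ^ n.+1 = (2 ^ n.+1) ^ 2)%N by rewrite -expnM mulnC expnM.
    by rewrite leq_exp2r // ltnW // ltn_expl.
  have hsq : n.+1%:R ^+ 2 <= (4 ^ n.+1)%:R :> R by rewrite -natrX ler_nat.
  have hn0 : 0 <= n%:R :> R by rewrite ler0n.
  have e1 : n.+1%:R = n%:R + 1 :> R by rewrite -addn1 natrD.
  rewrite /u /harmonic /= ler_pdivrMr // mulrAC ler_pdivlMr //.
  rewrite e1 in hsq *; nra.
have h2 : (fun n => ln (2:R) / 3 * u n) @ \oo --> ln (2:R) / 3 * 0 by apply: cvgMl_tmp.
have := cvgD (cvg_cst (ln (2:R) / 3)) h2.
rewrite mulr0 addr0 => h; exact: h.
Qed.
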